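(* Let $q_1<q_2<\cdots$ be the primes, $\Pi(x)$ the prime-counting function, and let $\phi:\mathbb{N}_0\to\mathbb{N}_0$ be defined by $\phi(q_j)=q_{j+1}$ for every $j\ge1$ and $\phi(x)=0$ if $x$ is not prime (including $x=0$). Then $\phi(x)\neq x$ for all $x\in\mathbb{N}$ and $\phi$ has no cycle. Moreover, for $n\ge2$: (1) $M_n(\phi)$ is nilpotent of degree $\Pi(n)$. (2) For $1\le k\le\Pi(n)$, $M_n(\phi)^k=\sum_{j=1}^{\Pi(n)-k}E_n(q_{j+k},q_j)$ and $\#M_n(\phi)^k=\Pi(n)-k$. (3) $\widehat{M}_n(\phi)^{-1}=I+\sum_{1\le j<i\le\Pi(n)}E_n(q_i,q_j)$ and $\#\widehat{M}_n(\phi)^{-1}=n+\binom{\Pi(n)}{2}$.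
   Context: $\mathbb{N}=\{1,2,\dots\}$, $\mathbb{N}_0=\mathbb{N}\cup\{0\}$, $D_n=\{1,\dots,n\}$, $D_{n,0}=D_n\cup\{0\}$. The local function $\phi_n:D_{n,0}\to D_{n,0}$ is $\phi_n(x)=\phi(x)$ if $x\in D_n$ and $\phi(x)\in D_n$, and $\phi_n(x)=0$ otherwise. A cycle of $\phi$ is given by $m\ge2$ and $x\in\mathbb{N}$ with $\phi^m(x)=x$. For $1\le i\le n$, $\mathbf{e}_i$ is the $i$-th unit vector in $\mathbb{Z}^n$ and $\mathbf{e}_0$ the zero vector; $E_n(i,j)=\mathbf{e}_i\mathbf{e}_j^t$. $M_n(\phi)$ is the $n\times n$ matrix whose $j$-th column is $\mathbf{e}_{\phi_n(j)}$, $\widehat{M}_n(\phi)=I-M_n(\phi)$. $\#A$ is the number of nonzero entries of $A$. A matrix $A$ is nilpotent of degree $k$ if $A^k=0$ and $A^{k-1}\ne0$. *)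

(* Defs.v *)
From HB Require Import structures.
From mathcomp Require Import all_boot all_order all_algebra.
Set Implicit Arguments. Unset Strict Implicit. Unset Printing Implicit Defensive.
Import Order.TTheory GRing.Theory Num.Theory.

(* Indices: the set D_n = {1,...,n} is represented by 'I_n via i |-> i.+1. *)

Definition next_prime (m : nat) : nat :=
  ex_minn (ex_intro (fun p => (m < p) && prime p) (s2val (prime_above m))
     (introT andP (conj (s2valP (prime_above m)) (s2valP' (prime_above m))))).

(* q j = j-th prime (q 1 = 2, q 2 = 3, ...); q 0 = 0 is unused *)
Definition q (j : nat) : nat := iter j next_prime 0.

Definition primepi (x : nat) : nat := \sum_(i < x.+1) prime i.

Definition phi (x : nat) : nat := if prime x then q (primepi x).+1 else 0.

Definition local_fun (n : nat) (f : nat -> nat) (x : nat) : nat :=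
  if (0 < x <= n) && (0 < f x <= n) then f x else 0.

(* M_n(f): j-th column is e_{f_n(j)} (e_0 = 0) *)
Definition Mn (n : nat) (f : nat -> nat) : 'M[int]_n :=
  \matrix_(i < n, j < n) ((local_fun n f j.+1 == i.+1)%:R : int).

Definition Mhat (n : nat) (f : nat -> nat) : 'M[int]_n := 1%:M - Mn n f.

Definition En (n i j : nat) : 'M[int]_n :=
  \matrix_(a < n, b < n) (((a.+1 == i) && (b.+1 == j))%:R : int).

Definition nnz (n : nat) (A : 'M[int]_n) : nat :=
  #|[set ab : 'I_n * 'I_n | A ab.1 ab.2 != 0]|.

Definition nilpotent_of_degree (n : nat) (A : 'M[int]_n) (k : nat) : Prop :=
  (A ^+ k = 0 /\ A ^+ k.-1 <> 0)%R.

(* Main.v *)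
Require Import Defs.
From HB Require Import structures.
From mathcomp Require Import all_boot all_order all_algebra zify.
Set Implicit Arguments. Unset Strict Implicit. Unset Printing Implicit Defensive.
Import Order.TTheory GRing.Theory Num.Theory.

Lemma np_spec m : [/\ m < next_prime m, prime (next_prime m) & forall p, m < p -> prime p -> next_prime m <= p].
Proof. rewrite /next_prime; case: ex_minnP => p /andP[Hm Hp] Hmin; split => // p' H1 H2; apply: Hmin; rewrite H1 H2 //. Qed.

Lemma qS j : q j.+1 = next_prime (q j). Proof. by []. Qed.
Lemma q_lt j : q j < q j.+1. Proof. by rewrite qS; case: (np_spec (q j)). Qed.
Lemma q_ltn i j : i < j -> q i < q j.
Proof. elim: j => // j IH; rewrite ltnS leq_eqVlt => /orP[/eqP->|/IH H]; first exact: q_lt.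
exact: ltn_trans H (q_lt j). Qed.
Lemma q_leq i j : i <= j -> q i <= q j.
Proof. rewrite leq_eqVlt => /orP[/eqP->//|/q_ltn/ltnW//]. Qed.
Lemma q_inj i j : q i = q j -> i = j.
Proof. move=> H; case: (ltngtP i j) => // /q_ltn; rewrite H ltnn //. Qed.
Lemma q_prime j : 0 < j -> prime (q j).
Proof. by case: j => // j _; rewrite qS; case: (np_spec (q j)). Qed.
Lemma primepi0 : primepi 0 = 0. Proof. by rewrite /primepi big_ord1. Qed.
Lemma primepiS x : primepi x.+1 = primepi x + prime x.+1.
Proof. by rewrite /primepi big_ord_recr. Qed.
Lemma sandwich x : q (primepi x) <= x < q (primepi x).+1.
Proof.
elim: x => [|x IH].
  by rewrite primepi0 /=; case: (np_spec 0).
case/andP: IH => H1 H2.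
rewrite primepiS; case Hp: (prime x.+1); rewrite ?addn1 ?addn0.
- have E : q (primepi x).+1 = x.+1.
    apply/eqP; rewrite eqn_leq H2 andbT qS.
    by case: (np_spec (q (primepi x))) => _ _ H; apply: H => //; rewrite ltnS.
  by rewrite E leqnn /= -E q_lt.
- rewrite (leq_trans H1 (leqnSn x)) /= ltn_neqAle H2 andbT.
  by apply/eqP => E; move: (q_prime (ltn0Sn (primepi x))); rewrite qS -E Hp.
Qed.
Lemma q_le_iff j n : (q j <= n) = (j <= primepi n).
Proof.
case/andP: (sandwich n) => H1 H2; apply/idP/idP => H.
- rewrite leqNgt; apply/negP => /q_leq H3; move: (leq_trans H3 H); rewrite leqNgt H2 //.
- exact: leq_trans (q_leq H) H1.
Qed.
Lemma primepi_q j : primepi (q j) = j.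
Proof.
case/andP: (sandwich (q j)) => H1 H2; apply/eqP; rewrite eqn_leq -q_le_iff leqnn andbT.
rewrite leqNgt; apply/negP => H; move: (leq_trans (q_leq H) H1); rewrite leqNgt q_lt //.
Qed.
Lemma prime_q x : prime x -> q (primepi x) = x.
Proof.
move=> Hp; case/andP: (sandwich x) => H1 H2; apply/eqP; rewrite eqn_leq H1 /=.
move: H1; rewrite leq_eqVlt => /orP[/eqP->//|H].
by move: H2; rewrite qS; case: (np_spec (q (primepi x))) => _ _ /(_ _ H Hp); rewrite leqNgt => /negP.
Qed.
Lemma primepi_prime_pos x : prime x -> 0 < primepi x.
Proof. move=> Hp; case E: (primepi x) => //; move: (prime_q Hp); rewrite E /= => H. by rewrite -H in Hp. Qed.
Lemma eq_q x j : 0 < j -> (x == q j) = prime x && (j == primepi x).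
Proof.
move=> Hj; apply/eqP/andP => [->|[Hp /eqP->]]; last by rewrite prime_q.
by rewrite q_prime // primepi_q.
Qed.
Lemma phi_q j : 0 < j -> phi (q j) = q j.+1.
Proof. by move=> Hj; rewrite /phi q_prime // primepi_q. Qed.

Lemma phi_cases x : phi x = 0 \/ x < phi x.
Proof.
rewrite /phi; case Hp: (prime x); last by left.
right; rewrite -{1}(prime_q Hp); exact: q_lt.
Qed.
Lemma phi0 : phi 0 = 0. Proof. by []. Qed.
Lemma iter_phi m x : 0 < m -> iter m phi x = 0 \/ x < iter m phi x.
Proof.
elim: m => // [[|m]] IH _; first by apply: phi_cases.
case: (IH isT) => H; rewrite iterS; first by rewrite H; left.
case: (phi_cases (iter m.+1 phi x)) => H'; [by rewrite H'; left | right].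
exact: ltn_trans H H'.
Qed.

Local Open Scope ring_scope.

Definition P n (g : nat -> nat) : 'M[int]_n := \matrix_(i < n, j < n) ((g j.+1 == i.+1)%:R : int).

Lemma mulb_int (b1 b2 : bool) : (b1%:R * b2%:R : int) = (b1 && b2)%:R.
Proof. by case: b1; case: b2; rewrite ?mulr0 ?mulr1 ?mul0r. Qed.

Lemma addb_int (b1 b2 : bool) : ~~ (b1 && b2) -> (b1%:R + b2%:R : int) = (b1 || b2)%:R.
Proof. by case: b1; case: b2; rewrite ?addr0 ?add0r. Qed.

Lemma sum_ind n v : \sum_(c < n) ((v == c.+1)%:R : int) = (0 < v <= n)%N%:R.
Proof.
elim: n => [|n IH]; first by rewrite big_ord0; case: v.
rewrite big_ord_recr /= IH addb_int; last by lia.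
by congr (_%:R); lia.
Qed.

Lemma P_mul n g h : P n g *m P n h = P n (fun x => if (0 < h x <= n)%N then g (h x) else 0%N).
Proof.
apply/matrixP => a b; rewrite !mxE.
under eq_bigr => c _ do rewrite !mxE.
transitivity (\sum_(c < n) ((h b.+1 == c.+1)%:R * (g (h b.+1) == a.+1)%:R : int)).
  apply: eq_bigr => c _; case: (eqVneq (h b.+1) c.+1) => [->|H]; first by rewrite mulrC.
  by rewrite !mulr0 mul0r.
rewrite -big_distrl /= sum_ind; case: ifP => _; rewrite ?mul1r ?mul0r //.
Qed.

Lemma P_ext n g h : (forall x, (0 < x <= n)%N -> g x = h x) -> P n g = P n h.
Proof. move=> H; apply/matrixP => a b; rewrite !mxE H //; have := ltn_ord b; lia. Qed.

Lemma P0 n : P n (fun _ => 0%N) = 0.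
Proof. by apply/matrixP => a b; rewrite !mxE. Qed.

Definition gk n k x := if prime x && (primepi x + k <= primepi n)%N then q (primepi x + k) else 0%N.

Lemma q_pos j : (0 < j)%N -> (0 < q j)%N.
Proof. by move/q_prime/prime_gt0. Qed.

Lemma M_eq n : Mn n phi = P n (gk n 1).
Proof.
apply: P_ext => x Hx; rewrite /local_fun /gk /phi Hx /=.
case Hp: (prime x) => //=.
by rewrite -qS q_pos // q_le_iff addn1 /=.
Qed.

Lemma gk_comp n k x : (0 < k)%N ->
  (if (0 < gk n 1 x <= n)%N then gk n k (gk n 1 x) else 0%N) = gk n k.+1 x.
Proof.
move=> Hk; rewrite /gk; case Hp: (prime x) => //=.
case H1: (primepi x + 1 <= primepi n)%N.
- rewrite q_pos ?addn1 // -addn1 (q_le_iff _ n) H1 /= q_prime ?addn1 // primepi_q /=.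
  by rewrite addSn addnS.
- rewrite /=; case: ifP => // H2; exfalso; lia.
Qed.

Lemma Mk n k : (0 < k)%N -> Mn n phi ^+ k = P n (gk n k).
Proof.
elim: k => // [[|k]] IH _; first by rewrite expr1 M_eq.
rewrite exprSr IH // M_eq -mulmxE P_mul; apply: P_ext => x _; exact: gk_comp.
Qed.
Lemma sum_nat_ind lo hi J : \sum_(lo <= j < hi) ((j == J)%:R : int) = (lo <= J < hi)%N%:R.
Proof.
elim: hi => [|hi IH]; first by rewrite big_geq //; case: (lo <= J)%N.
case: (leqP lo hi) => H.
- rewrite big_nat_recr //= IH addb_int; last by lia.
  by congr (_%:R); lia.
- rewrite big_geq //; rewrite (_ : (lo <= J < hi.+1)%N = false) //; lia.
Qed.

Lemma Esum n k : P n (gk n k) = \sum_(1 <= j < (primepi n - k).+1) En n (q (j + k)) (q j).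
Proof.
apply/matrixP => a b; rewrite summxE mxE.
transitivity (\sum_(1 <= j < (primepi n - k).+1) ((j == primepi b.+1)%:R * ((prime b.+1) && (a.+1 == q (primepi b.+1 + k)))%:R : int)).
2: apply: eq_big_nat => j Hj; rewrite mxE mulb_int; congr (_%:R); rewrite (eq_q b.+1 (j:=j)); last by lia.
2: by case: (eqVneq j (primepi b.+1)) => [->|]; rewrite ?andbF ?andbT //= andbC.
rewrite -big_distrl /= sum_nat_ind mulb_int; congr (_%:R).
rewrite /gk; case Hp: (prime b.+1); last by rewrite !andbF.
have HJ := primepi_prime_pos Hp.
rewrite (_ : (1 <= primepi b.+1 < (primepi n - k).+1)%N = (primepi b.+1 + k <= primepi n)%N); last by lia.
by rewrite /=; case: ifP => //= _; rewrite eq_sym.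
Qed.

Lemma nnz_sum n (A : 'M[int]_n) : nnz A = (\sum_(a<n) \sum_(b<n) (A a b != 0 : nat))%N.
Proof.
rewrite /nnz -sum1_card pair_bigA /= big_mkcond /=; apply: eq_bigr => p _; rewrite inE.
by case: (_ != _).
Qed.

Lemma sum_ind_nat n v : (\sum_(c < n) ((v == c.+1) : nat))%N = (0 < v <= n)%N.
Proof.
elim: n => [|n IH]; first by rewrite big_ord0; case: v.
rewrite big_ord_recr /= IH; case: (eqVneq v n.+1) => [->|H]; first by rewrite ltnn leqnn.
by rewrite addn0; congr (nat_of_bool _); lia.
Qed.

Lemma nnzP n g : nnz (P n g) = (\sum_(b<n) (0 < g b.+1 <= n)%N : nat)%N.
Proof.
rewrite nnz_sum exchange_big /=; apply: eq_bigr => b _.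
rewrite -sum_ind_nat; apply: eq_bigr => a _; rewrite mxE.
by case: (g b.+1 == a.+1).
Qed.

Lemma min_count n m : (\sum_(b<n) (prime b.+1 && (primepi b.+1 <= m)%N) : nat)%N = minn (primepi n) m.
Proof.
elim: n => [|n IH]; first by rewrite big_ord0 primepi0 min0n.
rewrite big_ord_recr /= IH primepiS; case: (prime n.+1) => /=; last by rewrite !addn0.
rewrite addn1; case: (leqP (primepi n).+1 m) => H /=; lia.
Qed.

Lemma nnzMk n k : nnz (P n (gk n k)) = (primepi n - k)%N.
Proof.
rewrite nnzP (_ : (primepi n - k)%N = minn (primepi n) (primepi n - k)); last by lia.
rewrite -min_count.
apply: eq_bigr => b _; rewrite /gk; case Hp: (prime b.+1) => //=.
have HJ := primepi_prime_pos Hp.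
case: ifP => H.
  rewrite q_pos ?q_le_iff; last by lia.
  by rewrite H (_ : (primepi b.+1 <= primepi n - k)%N = true) //; lia.
move/negbT: H => H.
by rewrite /= (_ : (primepi b.+1 <= primepi n - k)%N = false) //; lia.
Qed.

Lemma telescope (R : pzRingType) (x : R) m : (1 - x) * \sum_(k < m) x ^+ k = 1 - x ^+ m.
Proof.
elim: m => [|m IH]; first by rewrite big_ord0 mulr0 expr0 subrr.
by rewrite big_ord_recr /= mulrDr IH mulrBl mul1r -exprS addrA subrK.
Qed.

Lemma q1 : q 1 = 2%N.
Proof.
case: (np_spec 0) => H1 H2 H3; have := H3 2%N isT isT; have := prime_gt1 H2.
rewrite /q /=; lia.
Qed.

Lemma primepi_pos n : (2 <= n)%N -> (0 < primepi n)%N.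
Proof. by move=> Hn; rewrite -q_le_iff q1. Qed.

Lemma primepi_le (a : nat) n : prime a -> (a <= n)%N -> (primepi a <= primepi n)%N.
Proof. by move=> Hp Ha; rewrite -q_le_iff prime_q. Qed.

Definition Fm n : 'M[int]_n := \matrix_(a < n, b < n)
  ((a == b)%:R + (prime a.+1 && prime b.+1 && (primepi b.+1 < primepi a.+1)%N)%:R).

Lemma sum_ord_ind m K : \sum_(i < m) (((i : nat) == K)%:R : int) = (K < m)%N%:R.
Proof. by rewrite -(big_mkord xpredT (fun i => ((i == K)%:R : int))) sum_nat_ind. Qed.

Lemma S_eq n : (0 < primepi n)%N -> \sum_(k < primepi n) Mn n phi ^+ k = Fm n.
Proof.
move=> HP; rewrite (_ : primepi n = (primepi n).-1.+1); last by lia.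
rewrite big_ord_recl expr0 /=; apply/matrixP => a b; rewrite mxE [in RHS]mxE summxE.
have Ha := ltn_ord a.
congr (_ + _); first by rewrite !mxE; case: (a == b).
transitivity (\sum_(i < (primepi n).-1) (((i : nat) == (primepi a.+1 - primepi b.+1).-1)%:R *
   (prime a.+1 && prime b.+1 && (primepi b.+1 < primepi a.+1)%N)%:R : int)).
  apply: eq_bigr => i _; rewrite Mk // mxE mulb_int; congr (_%:R).
  rewrite /gk; case Hpb: (prime b.+1); last by rewrite /= !andbF.
  have HJ := primepi_prime_pos Hpb.
  rewrite /bump /= add1n.
  case Hpa: (prime a.+1).
    have HI := primepi_le Hpa Ha.
    rewrite /=; case: ifP => H.
      by rewrite eq_sym eq_q ?Hpa /=; lia.
    by move/negbT: H => H; rewrite eq_sym /=; lia.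
  rewrite /= andbF; case: ifP => _ //.
  by rewrite eq_sym eq_q ?Hpa //; lia.
rewrite -big_distrl /= sum_ord_ind mulb_int; congr (_%:R).
case Hpb: (prime b.+1); last by rewrite /= !andbF.
case Hpa: (prime a.+1); last by rewrite /= !andbF.
have HJ := primepi_prime_pos Hpb; have HI := primepi_le Hpa Ha.
rewrite /=; lia.
Qed.

Lemma N_eq n : 1%:M + \sum_(1 <= i < (primepi n).+1) \sum_(1 <= j < i) En n (q i) (q j) = Fm n.
Proof.
apply/matrixP => a b; rewrite !mxE summxE.
have Ha := ltn_ord a.
congr (_ + _).
transitivity (\sum_(1 <= i < (primepi n).+1) ((i == primepi a.+1)%:R *
   (prime a.+1 && prime b.+1 && (1 <= primepi b.+1 < primepi a.+1)%N)%:R : int)).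
  apply: eq_big_nat => i Hi; rewrite summxE.
  transitivity (\sum_(1 <= j < i) ((j == primepi b.+1)%:R * ((a.+1 == q i) && prime b.+1)%:R : int)).
    apply: eq_big_nat => j Hj; rewrite mxE mulb_int; congr (_%:R).
    rewrite (eq_q b.+1 (j:=j)); last by lia.
    by case: (j == primepi b.+1); case: (a.+1 == q i); case: (prime b.+1).
  rewrite -big_distrl /= sum_nat_ind !mulb_int; congr (_%:R).
  rewrite (eq_q a.+1 (j:=i)); last by lia.
  by case: (eqVneq i (primepi a.+1)) => [->|_]; case: (prime a.+1); case: (prime b.+1); rewrite /= ?andbF ?andbT //; lia.
rewrite -big_distrl /= sum_nat_ind mulb_int; congr (_%:R).
case Hpb: (prime b.+1); last by rewrite /= !andbF.
case Hpa: (prime a.+1); last by rewrite /= !andbF.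
have HJ := primepi_prime_pos Hpb; have HI := primepi_le Hpa Ha.
rewrite /=; lia.
Qed.

Lemma nnz0 n : nnz (0 : 'M[int]_n) = 0%N.
Proof. by rewrite nnz_sum big1 // => a _; rewrite big1 // => b _; rewrite mxE. Qed.

Lemma binsum n : (\sum_(a < n) (prime a.+1 * (primepi a.+1 - 1)) : nat)%N = 'C(primepi n, 2).
Proof.
elim: n => [|n IH]; first by rewrite big_ord0 primepi0.
rewrite big_ord_recr /= IH primepiS; case Hp: (prime n.+1) => /=; last by rewrite !addn0 ?muln0 ?mul0n.
by rewrite addn1 binS bin1 mul1n; lia.
Qed.

Lemma nnzF n : nnz (Fm n) = (n + 'C(primepi n, 2))%N.
Proof.
rewrite nnz_sum -binsum.
transitivity (\sum_(a < n) (1 + prime a.+1 * (primepi a.+1 - 1)))%N; last first.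
  by rewrite big_split /= sum1_card card_ord.
apply: eq_bigr => a _.
have Ha := ltn_ord a.
transitivity (\sum_(b < n) ((a.+1 == b.+1) + (prime a.+1 && (prime b.+1 && (primepi b.+1 <= primepi a.+1 - 1)%N))))%N.
  apply: eq_bigr => b _; rewrite mxE.
  case: (eqVneq a b) => [->|Hab].
    rewrite eqxx ltnn andbF /=; case Hp: (prime b.+1) => //=.
    rewrite (_ : (primepi b.+1 <= primepi b.+1 - 1)%N = false) //; have := primepi_prime_pos Hp; lia.
  have -> : (a.+1 == b.+1 :> nat) = false by apply/negbTE; rewrite eqSS.
  case Hpa: (prime a.+1); case Hpb: (prime b.+1) => //=.
  have HJ := primepi_prime_pos Hpb.
  by case: (ltnP (primepi b.+1) (primepi a.+1)) => H /=; [rewrite (_ : (primepi b.+1 <= primepi a.+1 - 1)%N = true) //; lia | rewrite (_ : (primepi b.+1 <= primepi a.+1 - 1)%N = false) //; lia].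
rewrite big_split /= (sum_ind_nat n a.+1) ltn0Sn Ha /=; congr (_ + _)%N.
case Hpa: (prime a.+1) => /=; last by rewrite big1.
rewrite min_count mul1n; have HI := primepi_le Hpa Ha; lia.
Qed.

Theorem proposition5p3 :
  (forall x : nat, (0 < x)%N -> phi x <> x) /\
  ~ (exists m x : nat, (2 <= m)%N /\ (0 < x)%N /\ iter m phi x = x) /\
  (forall n : nat, (2 <= n)%N ->
     nilpotent_of_degree (Mn n phi) (primepi n) /\
     (forall k : nat, (1 <= k <= primepi n)%N ->
        Mn n phi ^+ k =
          \sum_(1 <= j < (primepi n - k).+1) En n (q (j + k)) (q j) /\
        nnz (Mn n phi ^+ k) = (primepi n - k)%N) /\
     (Mhat n phi \in unitmx /\
      invmx (Mhat n phi) =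
        1%:M + \sum_(1 <= i < (primepi n).+1) \sum_(1 <= j < i) En n (q i) (q j) /\
      nnz (invmx (Mhat n phi)) = (n + 'C(primepi n, 2))%N)).
Proof.
split.
  move=> x Hx; case: (phi_cases x) => H; lia.
split.
  move=> [m [x [Hm [Hx Hit]]]]; case: (iter_phi x (ltnW Hm)); rewrite Hit; lia.
move=> n Hn; have HP := primepi_pos Hn.
split.
  split.
    rewrite Mk // -(P0 n); apply: P_ext => x _; rewrite /gk.
    case Hp: (prime x) => //=; have := primepi_prime_pos Hp.
    by case: ifP => // H; lia.
  case E: (primepi n) => [|[|m]]; first by rewrite E in HP.
    rewrite /= expr0 => /matrixP/(_ (Ordinal (ltnW Hn)) (Ordinal (ltnW Hn))).
    by rewrite !mxE eqxx.
  move=> H0; have := nnzMk n m.+1; rewrite -Mk // E /= H0 nnz0; lia.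
split.
  move=> k Hk; rewrite Mk; last by lia.
  by rewrite -Esum nnzMk.
have HS : Mhat n phi *m (\sum_(k < primepi n) Mn n phi ^+ k) = 1%:M.
  rewrite mulmxE /Mhat telescope Mk // (_ : P n (gk n (primepi n)) = 0) ?subr0 //.
  rewrite -(P0 n); apply: P_ext => x _; rewrite /gk.
  case Hp: (prime x) => //=; have := primepi_prime_pos Hp.
  by case: ifP => // H; lia.
have Hu := (mulmx1_unit HS).1.
have Hinv : invmx (Mhat n phi) = \sum_(k < primepi n) Mn n phi ^+ k.
  by rewrite -[RHS](mulKmx Hu) HS mulmx1.
split; first exact: Hu.
rewrite Hinv S_eq // N_eq; split => //; exact: nnzF.
Qed.
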